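(* Let $P$ be a finite $(3+1)$-free poset and let $\mathsf a=a_na_{n-1}\cdots a_1$, $\mathsf b=b_nb_{n-1}\cdots b_1$ and $\mathsf v$ be words in the alphabet $P$ such that (i) the words $\mathsf a\mathsf v$ and $\mathsf b\mathsf v$ are $P$-strictly decreasing; (ii) $b_i\not<_Pa_i$ for all $i\in[n]$; (iii) $a_i<_Pb_{i+1}$ for all $i\in[n-1]$. Then $\mathbf{u}_{\mathsf a}\mathbf{u}_{\mathsf v}\mathbf{u}_{\mathsf b}\equiv\mathbf{u}_{\mathsf a}\mathbf{u}_{\mathsf b}\mathbf{u}_{\mathsf v}\pmod{I^P_{\mathrm{plac}}}$.
   Context: $a<_Pb$: strict order; $a\sim_Pb$: incomparable or equal. A word $w_1\cdots w_m$ is $P$-strictly decreasing if $w_1>_Pw_2>_P\cdots>_Pw_m$. $\mathcal{U}_P=\mathbb{Z}\langle u_a:a\in P\rangle$, $\mathbf{u}_w=u_{w_1}\cdots u_{w_m}$. $I^P_{\mathrm{plac}}$ is the two-sided ideal generated by: $u_bu_au_c-u_bu_cu_a$ when $a<_Pb$, $c\not<_Pb$, $a<_Pc$; $u_cu_au_b-u_au_cu_b$ when $b\not<_Pa$, $b<_Pc$, $a<_Pc$; $u_cu_au_b-u_bu_cu_a$ when $a\sim_Pb$, $b\sim_Pc$, $a<_Pc$. *)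

(* Defs.v *)
From mathcomp Require Import all_boot all_order all_algebra.
Set Implicit Arguments. Unset Strict Implicit. Unset Printing Implicit Defensive.
Import Order.TTheory.
Local Open Scope order_scope.

(* The free associative ring Z<u_a : a in P> has the words (seq P) as a
   Z-basis; u_w is the basis element of the word w.  An element of it is
   represented by its coefficient function (seq P -> int). *)

Section Defs.
Context {d : Order.disp_t} {P : finPOrderType d}.

Definition three_one_free : Prop :=
  forall x y z w : P, x < y -> y < z ->
    [|| w >=< x, w >=< y | w >=< z].

Definition simP (a b : P) : bool := (a == b) || ~~ (a >=< b).

Definition strict_decr (w : seq P) : bool := sorted (fun x y => y < x) w.

(* generators w - w' of I^P_plac, encoded as the pair (w, w') *)
Definition plac_gen (w w' : seq P) : Prop :=
  exists a b c : P,
    [/\ a < b, ~~ (c < b), a < c & (w = [:: b; a; c] /\ w' = [:: b; c; a])]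
 \/ [/\ ~~ (b < a), b < c, a < c & (w = [:: c; a; b] /\ w' = [:: a; c; b])]
 \/ [/\ simP a b, simP b c, a < c & (w = [:: c; a; b] /\ w' = [:: b; c; a])].

(* f (given by its coefficients) lies in the two-sided ideal I^P_plac:
   it is a finite Z-combination of u_l (u_g - u_g') u_r with (g,g') a generator *)
Definition in_Iplac (f : seq P -> int) : Prop :=
  exists s : seq (int * seq P * seq P * seq P * seq P),
    (forall t, t \in s -> plac_gen t.1.1.2 t.1.2) /\
    forall w : seq P,
      f w = (\sum_(t <- s)
               t.1.1.1.1 * (((w == t.1.1.1.2 ++ t.1.1.2 ++ t.2) : int)
                            - ((w == t.1.1.1.2 ++ t.1.2 ++ t.2) : int)))%R.

Definition plac_congr (w1 w2 : seq P) : Prop :=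
  in_Iplac (fun w => (((w == w1) : int) - ((w == w2) : int))%R).

End Defs.

(* Main.v *)
Require Import Defs.
From mathcomp Require Import all_boot all_order all_algebra.
From mathcomp Require Import zify.
Import Order.TTheory GRing.Theory.
Local Open Scope order_scope.

Section Aux.
Context {d : Order.disp_t} {P : finPOrderType d}.

Lemma pc_refl (w : seq P) : plac_congr w w.
Proof.
exists [::]; split => // w'; by rewrite big_nil GRing.subrr.
Qed.

Lemma pc_trans (w1 w2 w3 : seq P) :
  plac_congr w1 w2 -> plac_congr w2 w3 -> plac_congr w1 w3.
Proof.
move=> [s1 [H1 E1]] [s2 [H2 E2]]; exists (s1 ++ s2); split.
  by move=> t; rewrite mem_cat => /orP [] ?; [apply: H1 | apply: H2].
move=> w; rewrite big_cat /= -E1 -E2.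
by rewrite GRing.addrA GRing.subrK.
Qed.

Lemma pc_sym (w1 w2 : seq P) : plac_congr w1 w2 -> plac_congr w2 w1.
Proof.
move=> [s [H E]].
exists [seq ((- t.1.1.1.1)%R, t.1.1.1.2, t.1.1.2, t.1.2, t.2) | t <- s]; split.
  by move=> t /mapP [t' /H ? ->].
move=> w; rewrite big_map.
have -> : (((w == w2) : int) - ((w == w1) : int) =
           - (((w == w1) : int) - ((w == w2) : int)))%R by rewrite opprB.
rewrite E -sumrN; apply: eq_bigr => t _ /=; by rewrite mulNr.
Qed.

Lemma pc_step (l g g' r : seq P) :
  plac_gen g g' -> plac_congr (l ++ g ++ r) (l ++ g' ++ r).
Proof.
move=> Hg; exists [:: (1%R, l, g, g', r)]; split.
  by move=> t; rewrite inE => /eqP -> /=.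
by move=> w; rewrite big_seq1 /= GRing.mul1r.
Qed.

Inductive pstep : seq P -> seq P -> Prop :=
  PS l g g' r : plac_gen g g' -> pstep (l ++ g ++ r) (l ++ g' ++ r).

Inductive eqv : seq P -> seq P -> Prop :=
| rst_step x y : pstep x y -> eqv x y
| rst_refl x : eqv x x
| rst_sym x y : eqv x y -> eqv y x
| rst_trans x y z : eqv x y -> eqv y z -> eqv x z.

Lemma eqv_pc w1 w2 : eqv w1 w2 -> plac_congr w1 w2.
Proof.
elim=> {w1 w2}.
- by move=> x y [l g g' r Hg]; apply: pc_step.
- by move=> x; apply: pc_refl.
- by move=> x y _; apply: pc_sym.
- by move=> x y z _ H1 _ H2; apply: pc_trans H1 H2.
Qed.

Lemma eqv_ctx l r w1 w2 : eqv w1 w2 -> eqv (l ++ w1 ++ r) (l ++ w2 ++ r).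
Proof.
elim=> {w1 w2}.
- move=> x y [l0 g g' r0 Hg]; apply: rst_step.
  have := @PS (l ++ l0) g g' (r0 ++ r) Hg; by rewrite -!catA.
- by move=> x; apply: rst_refl.
- by move=> x y _; apply: rst_sym.
- by move=> x y z _ H1 _ H2; apply: rst_trans H1 H2.
Qed.

Definition gtr : rel P := fun x y => y < x.
Lemma gtr_trans : transitive gtr.
Proof. by move=> a b c h1 h2; rewrite /gtr (lt_trans h2 h1). Qed.

Lemma nlt_of_lt {y z : P} : y < z -> ~~ (z < y).
Proof. by move=> yz; apply/negP => zy; move: (lt_asym y z); rewrite yz zy. Qed.

Lemma move_left (v : seq P) : forall (x z : P) (l r : seq P),
  path gtr x v -> ~~ (z < x) -> all (fun y => y < z) v ->
  eqv (l ++ x :: v ++ z :: r) (l ++ x :: z :: v ++ r).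
Proof.
elim: v => [|y v IH] x z l r /=; first by move=> *; apply: rst_refl.
move=> /andP [yx pv] zx /andP [yz av].
have H := IH y z (rcons l x) r pv (nlt_of_lt yz) av.
rewrite !cat_rcons in H; apply: rst_trans H _.
apply: rst_step.
have := @PS l [:: x; y; z] [:: x; z; y] (v ++ r).
apply => //; exists y, x, z; left; split => //.
Qed.

Definition aw (n : nat) (A : nat -> P) := [seq A (n - k) | k <- iota 0 n].

Lemma awS n A : aw n.+1 A = rcons (aw n (fun i => A i.+1)) (A 1).
Proof.
rewrite /aw -addn1 iotaD map_cat /= add0n cats1 addn1 subSnn.
congr rcons; apply/eq_in_map => k; rewrite mem_iota add0n => /andP [_ kn].
by rewrite subSn // ltnW.
Qed.

Lemma sorted_rcons2 (s : seq P) x y :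
  sorted gtr (rcons (rcons s x) y) = sorted gtr (rcons s x) && gtr x y.
Proof. by rewrite -!cats1 -catA /= sorted_cat_cons /= andbT cats1. Qed.

Lemma mainL n : forall (A B : nat -> P) (v : seq P),
  sorted gtr (aw n A ++ v) -> sorted gtr (aw n B ++ v) ->
  (forall i, (1 <= i <= n)%N -> ~~ (B i < A i)) ->
  (forall i, (1 <= i <= n.-1)%N -> A i < B i.+1) ->
  eqv (aw n A ++ v ++ aw n B) (aw n A ++ aw n B ++ v).
Proof.
elim: n => [|n IH] A B v Sa Sb H2 H3; first by rewrite /aw /= cats0; apply: rst_refl.
move: Sa Sb; rewrite !awS.
set a' := aw n _; set b' := aw n _ => Sa Sb.
have H2' : forall i, (1 <= i <= n)%N -> ~~ (B i.+1 < A i.+1).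
  by move=> i hi; apply: H2; lia.
have H3' : forall i, (1 <= i <= n.-1)%N -> A i.+1 < B i.+2.
  by move=> i hi; apply: H3; lia.
have Sb1 : sorted gtr (rcons b' (A 1)).
  case: n IH H2 H3 H2' H3' @a' @b' Sa Sb => [|n] IH H2 H3 H2' H3' a' b' Sa Sb; first by [].
  move: Sb; rewrite /b' awS => /cat_sorted2 [+ _].
  rewrite !sorted_rcons2 => /andP [-> _] /=.
  by apply: H3; lia.
have Sa1 : sorted gtr (rcons a' (A 1)) by case: (cat_sorted2 Sa).
have pa : path gtr (A 1) v by move: Sa; rewrite -cats1 -catA sorted_cat_cons => /andP [].
have pb : path gtr (B 1) v by move: Sb; rewrite -cats1 -catA sorted_cat_cons => /andP [].
have IH1 := IH (fun i => A i.+1) (fun i => B i.+1) (A 1 :: v) ltac:(by rewrite -cat_rcons)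
  ltac:(by rewrite sorted_cat_cons Sb1 pa) H2' H3'.
have IH2 := IH (fun i => A i.+1) (fun i => B i.+1) [:: A 1] ltac:(by rewrite cats1) ltac:(by rewrite cats1) H2' H3'.
have e1 := eqv_ctx [::] [:: B 1] _ _ IH1.
have e2 := @move_left v (A 1) (B 1) (a' ++ b') [::] pa (H2 1 ltac:(lia))
  ltac:(by move: pb; rewrite (path_sortedE gtr_trans) => /andP []).
have e3 := eqv_ctx [::] (B 1 :: v) _ _ (rst_sym _ _ IH2).
rewrite !cat_rcons -cats1 /= -!catA /= ?cats0 -?catA -/a' -/b' in e1 e2 e3 *.
by apply: rst_trans e1 _; apply: rst_trans e2 _; exact: e3.
Qed.

End Aux.

(* a = a_n a_(n-1) ... a_1 is the word [seq A (n - k) | k <- iota 0 n] *)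
Theorem mainTheorem14 (d : Order.disp_t) (P : finPOrderType d)
  (n : nat) (A B : nat -> P) (v : seq P) :
  three_one_free (P := P) ->
  strict_decr ([seq A (n - k) | k <- iota 0 n] ++ v) ->
  strict_decr ([seq B (n - k) | k <- iota 0 n] ++ v) ->
  (forall i, (1 <= i <= n)%N -> ~~ (B i < A i)) ->
  (forall i, (1 <= i <= n.-1)%N -> A i < B i.+1) ->
  plac_congr ([seq A (n - k) | k <- iota 0 n] ++ v ++ [seq B (n - k) | k <- iota 0 n])
             ([seq A (n - k) | k <- iota 0 n] ++ [seq B (n - k) | k <- iota 0 n] ++ v).
Proof.
move=> _ Sa Sb H2 H3.
by apply: eqv_pc; apply: (mainL n A B v).
Qed.
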